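(* Let $0<a<1$, $u=a^{-1}+\sqrt{a^{-2}-1}$, and $\alpha_n=-\frac{u-u^{-1}}{u^{n+2}-u^{-n-2}}$ for $n\ge0$. Then for nonnegative integers $n,r,s$, \[ \mu_{n,r,s}=\begin{cases}1&\text{if } s=n+r,\\[2pt] -\dfrac{(u^n-u^{-n})(u-u^{-1})}{(u^{s+2}-u^{-(s+2)})(u^{r+1}-u^{-(r+1)})}&\text{if } n-1\le s<n+r,\\[2pt] 0&\text{otherwise.}\end{cases} \]
   Context: For a polynomial $f(z)=\sum_{k=0}^n a_kz^k$ of degree $n$, write $\overline{f}(z)=\sum_k\overline{a_k}z^k$ and $f^*(z)=z^n\overline{f}(1/z)$. Given $(\alpha_n)$ with $|\alpha_n|<1$, define monic $\Phi_n$ by $\Phi_0=1$, $\Phi_{n+1}(z)=z\Phi_n(z)-\overline{\alpha_n}\Phi_n^*(z)$. Let $\mathcal{L}$ be the unique linear functional on Laurent polynomials with $\mathcal{L}(1)=1$ and $\mathcal{L}(\Phi_m(z)\overline{\Phi_n}(1/z))=0$ for $m\neq n$; set $\langle f,g\rangle=\mathcal{L}(f(z)\overline{g}(1/z))$ and $\mu_{n,r,s}=\langle\Phi_s(z),z^n\Phi_r(z)\rangle/\langle\Phi_s,\Phi_s\rangle$. *)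

(* Defs.v *)
From HB Require Import structures.
From mathcomp Require Import all_boot all_order all_algebra.
Set Implicit Arguments. Unset Strict Implicit. Unset Printing Implicit Defensive.
Import Order.TTheory GRing.Theory Num.Theory.
Local Open Scope ring_scope.

Section OPUC.
Variable C : numClosedFieldType.

(* f^*(z) = z^n \bar f(1/z), n = deg f *)
Definition polystar (p : {poly C}) : {poly C} :=
  let n := (size p).-1 in \poly_(i < n.+1) (p`_(n - i))^*.

Fixpoint Phi (alpha : nat -> C) (n : nat) : {poly C} :=
  match n with
  | 0 => 1
  | n'.+1 => 'X * Phi alpha n' - (alpha n')^* *: polystar (Phi alpha n')
  end.

(* A linear functional L on Laurent polynomials is given by its moments
   c k = L(z^k), k : int.  Then  <f,g> = L(f(z) \bar g(1/z))
   = sum_{i,j} f_i conj(g_j) c(i - j). *)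
Definition lform (c : int -> C) (f g : {poly C}) : C :=
  \sum_(i < size f) \sum_(j < size g) f`_i * (g`_j)^* * c (i%:Z - j%:Z).

Definition is_OPUC_functional (alpha : nat -> C) (c : int -> C) : Prop :=
  c 0 = 1 /\ forall m n : nat, m <> n -> lform c (Phi alpha m) (Phi alpha n) = 0.

Definition mu (alpha : nat -> C) (c : int -> C) (n r s : nat) : C :=
  lform c (Phi alpha s) ('X^n * Phi alpha r) / lform c (Phi alpha s) (Phi alpha s).

End OPUC.

(* Submission.v *)
Require Import Defs.
From HB Require Import structures.
From mathcomp Require Import all_boot all_order all_algebra.
From mathcomp Require Import ring lra zify.
Import Order.TTheory GRing.Theory Num.Theory.
Local Open Scope ring_scope.

Ltac bt b := rewrite (_ : b = true); last by apply/idP; lia.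
Ltac bf b := rewrite (_ : b = false); last by apply/negbTE/negP; lia.

Lemma Phi_ext (C : numClosedFieldType) (a1 a2 : nat -> C) :
  (forall n, a1 n = a2 n) -> forall n, Phi a1 n = Phi a2 n.
Proof. by move=> h; elim=> [|n IH] //=; rewrite IH h. Qed.

Section Main.
Variable C : numClosedFieldType.
Variable u : C.
Hypothesis hu1 : 1 < u.

Definition sk (k : nat) : C := u ^+ k - u ^- k.

Lemma u_gt0 : 0 < u. Proof. exact: lt_trans ltr01 hu1. Qed.
Lemma u_neq0 : u != 0. Proof. by rewrite gt_eqF // u_gt0. Qed.
Lemma uconj : u^* = u. Proof. by rewrite geC0_conj // ltW // u_gt0. Qed.

Lemma sk_gt0 k : (0 < k)%N -> 0 < sk k.
Proof.
move=> hk; rewrite /sk subr_gt0.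
have h1 : 1 < u ^+ k by rewrite exprn_egt1 ?hu1 // -lt0n.
have h0 : 0 < u ^+ k by exact: lt_trans ltr01 h1.
by apply: (lt_trans _ h1); rewrite invf_lt1.
Qed.

Lemma sk_neq0 k : (0 < k)%N -> sk k != 0.
Proof. by move=> hk; rewrite gt_eqF // sk_gt0. Qed.

Lemma sk0 : sk 0 = 0.
Proof. by rewrite /sk expr0 invr1 subrr. Qed.

Lemma u_real : u \is Num.real. Proof. by rewrite gtr0_real // u_gt0. Qed.
Lemma sk_real k : sk k \is Num.real.
Proof. by rewrite /sk rpredB ?rpredV ?rpredX // u_real. Qed.
Lemma sk_conj k : (sk k)^* = sk k.
Proof. exact: conj_Creal (sk_real k). Qed.
Lemma skq_conj a b : (sk a / sk b)^* = sk a / sk b.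
Proof. by apply: conj_Creal; rewrite rpredM ?rpredV ?sk_real. Qed.

Lemma sid k m : sk k * sk (k + m).+1 + sk 1 * sk m = sk k.+1 * sk (k + m).
Proof.
rewrite /sk !exprS !exprD expr0.
have hU : u ^+ k != 0 by rewrite expf_neq0 // u_neq0.
have hM : u ^+ m != 0 by rewrite expf_neq0 // u_neq0.
have := u_neq0 => hu.
by field; rewrite hU hM hu.
Qed.


Definition P n : {poly C} := \poly_(i < n.+1) (sk i.+1 / sk n.+1).
Definition alpha (n : nat) : C := - sk 1 / sk n.+2.
Lemma alphaE n : alpha n = - (u - u^-1) / (u ^+ n.+2 - u ^- n.+2).
Proof. by rewrite /alpha /sk expr1. Qed.

Lemma sizeP n : size (P n) = n.+1.
Proof. by rewrite size_poly_eq //= divff ?oner_eq0 // sk_neq0. Qed.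

Lemma coefP n k : (P n)`_k = if (k < n.+1)%N then sk k.+1 / sk n.+1 else 0.
Proof. exact: coef_poly. Qed.

Lemma starP n : polystar (P n) = \poly_(i < n.+1) (sk (n - i).+1 / sk n.+1).
Proof.
rewrite /polystar sizeP /=; apply: eq_poly => i hi.
by rewrite coefP ltnS leq_subr skq_conj.
Qed.

Lemma alpha_conj n : (alpha n)^* = alpha n.
Proof. by apply: conj_Creal; rewrite /alpha rpredM ?rpredN ?rpredV ?sk_real. Qed.

Lemma solve_help (A B Cc D X Y : C) : X != 0 -> Y != 0 ->
  A * Y + B * Cc = D * X -> A / X - (- B / Y) * (Cc / X) = D / Y.
Proof.
move=> hX hY e; have -> : D = (A * Y + B * Cc) / X by rewrite e mulfK.
by field; rewrite hX hY.
Qed.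

Lemma PhiE n : Phi alpha n = P n.
Proof.
elim: n => [|n IH].
  by apply/polyP => k; rewrite coef1 coefP /=; case: k => [|k] //=; rewrite divff // sk_neq0.
rewrite /= IH starP; apply/polyP => k.
rewrite coefB coefZ coefXM !coef_poly alpha_conj.
case: k => [|k] /=.
  rewrite subn0 divff ?sk_neq0 // mulr1 sub0r /alpha mulNr opprK.
  by [].
case: (ltngtP k n) => h.
- rewrite !ltnS (ltnW h) h.
  have en : n = (k.+1 + (n - k.+1))%N by rewrite subnKC.
  move: (n - k.+1)%N en => m en; rewrite en /alpha.
  apply: solve_help; rewrite ?sk_neq0 //.
  have := sid k.+1 m.+1; rewrite !addnS !addSn.
  by move=> <-; rewrite mulrC.
- rewrite ltnNge h /= ltnNge ltnS (ltnW h) /= ltnNge ltnS h /=.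
  by rewrite mulr0 subr0.
- by rewrite h ltnSn ltnn mulr0 subr0 ltnSn !divff ?sk_neq0.
Qed.


Lemma moments (d : nat -> C) :
  (forall m, (0 < m)%N -> \sum_(i < m.+1) sk i.+1 / sk m.+1 * d i = 0) ->
  d 1%N = - sk 1 / sk 2 * d 0%N /\ forall m, d m.+2 = 0.
Proof.
move=> h.
have T : forall m, (0 < m)%N -> \sum_(i < m.+1) sk i.+1 * d i = 0.
  move=> m hm; have := h m hm.
  rewrite (eq_bigr (fun i : 'I_m.+1 => sk i.+1 * d i / sk m.+1)); last first.
    by move=> i _; rewrite mulrAC.
  rewrite -mulr_suml => /eqP; rewrite mulf_eq0 invr_eq0 (negbTE (sk_neq0 m.+1 isT)) orbF.
  by move/eqP.
split.
  have := T 1%N isT; rewrite !big_ord_recr big_ord0 /= add0r => /eqP.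
  rewrite addr_eq0 => /eqP e.
  have h2 := sk_neq0 2 isT.
  by rewrite mulrAC mulNr e opprK mulrAC divff // mul1r.
move=> m; have := T m.+2 isT; rewrite big_ord_recr /= T // add0r => /eqP.
by rewrite mulf_eq0 (negbTE (sk_neq0 m.+3 isT)) => /eqP.
Qed.

Variable c : int -> C.
Hypothesis hc0 : c 0 = 1.
Hypothesis horth : forall m n : nat, m <> n -> lform c (Phi alpha m) (Phi alpha n) = 0.

Lemma P0 : P 0 = 1.
Proof. by rewrite -(PhiE 0). Qed.

Definition c1 : C := locked (- sk 1 / sk 2).
Lemma c1E : c1 = - sk 1 / sk 2. Proof. by rewrite /c1 -lock. Qed.

Lemma cpos : c 1 = c1 /\ forall m : nat, c (m.+2)%:Z = 0.
Proof.
suff hm : forall m, (0 < m)%N -> \sum_(i < m.+1) sk i.+1 / sk m.+1 * c i%:Z = 0.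
  have [h1 h2] := moments (fun i => c i%:Z) hm.
  by split => //; rewrite h1 hc0 mulr1 c1E.
move=> m hm; have neq : m <> 0%N by move=> e; rewrite e in hm.
have := horth _ _ neq.
rewrite /lform !PhiE P0 sizeP size_poly1.
under eq_bigr => i _ do rewrite big_ord1 coef1 /= conjC1 mulr1 subr0 coefP ltn_ord.
by [].
Qed.

Lemma cneg : c (-1) = c1 /\ forall m : nat, c (- (m.+2)%:Z) = 0.
Proof.
suff hm : forall m, (0 < m)%N -> \sum_(i < m.+1) sk i.+1 / sk m.+1 * c (- i%:Z) = 0.
  have [h1 h2] := moments (fun i => c (- i%:Z)) hm.
  by split => //; rewrite h1 /= oppr0 hc0 mulr1 c1E.
move=> m hm.
have neq : 0%N <> m by move=> e; rewrite -e in hm.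
have := horth _ _ neq.
rewrite /lform !PhiE P0 sizeP size_poly1 big_ord1.
under eq_bigr => i _ do rewrite coef1 /= mul1r sub0r coefP ltn_ord skq_conj.
by [].
Qed.

Lemma cE (i j : nat) :
  c (i%:Z - j%:Z) = (i == j)%:R + c1 * (i == j.+1)%:R + c1 * (i.+1 == j)%:R.
Proof.
have [cp1 cp2] := cpos; have [cn1 cn2] := cneg.
case: (ltngtP i j) => h.
- have ej : j = (i + (j - i))%N by rewrite subnKC // ltnW.
  have hp : (0 < j - i)%N by rewrite subn_gt0.
  move: (j - i)%N hp ej => e hp ->.
  have -> : i%:Z - (i + e)%:Z = - e%:Z by rewrite PoszD opprD addrA subrr add0r.
  case: e hp => [|[|e]] // _.
    rewrite cn1.
    rewrite (_ : (i == (i + 1).+1)%N = false); last by apply/negbTE/eqP; lia.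
    by rewrite addn1 eqxx !mulr0 mulr1 !add0r.
  rewrite -[(- (e.+2)%:Z)]/(- (e.+2)%:Z) cn2.
  rewrite (_ : (i == (i + e.+2).+1)%N = false); last by apply/negbTE/eqP; lia.
  rewrite (_ : (i.+1 == (i + e.+2))%N = false); last by apply/negbTE/eqP; lia.
  by rewrite !mulr0 !addr0.
- have ei : i = (j + (i - j))%N by rewrite subnKC // ltnW.
  have hp : (0 < i - j)%N by rewrite subn_gt0.
  move: (i - j)%N hp ei => e hp ->.
  have -> : (j + e)%:Z - j%:Z = e%:Z by rewrite PoszD addrAC subrr add0r.
  case: e hp => [|[|e]] // _.
    rewrite cp1.
    rewrite (_ : ((j + 1).+1 == j)%N = false); last by apply/negbTE/eqP; lia.
    by rewrite addn1 eqxx !mulr0 mulr1 add0r addr0.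
  rewrite cp2.
  rewrite (_ : (j + e.+2 == j.+1)%N = false); last by apply/negbTE/eqP; lia.
  rewrite (_ : ((j + e.+2).+1 == j)%N = false); last by apply/negbTE/eqP; lia.
  by rewrite !mulr0 !addr0.
- rewrite h subrr hc0.
  rewrite (_ : (j == j.+1)%N = false); last by apply/negbTE/eqP; lia.
  rewrite (_ : (j.+1 == j)%N = false); last by apply/negbTE/eqP; lia.
  by rewrite !mulr0 !addr0.
Qed.


Lemma sum_delta (M k : nat) (F : nat -> C) :
  ((M <= k)%N -> F k = 0) -> \sum_(i < M) F i * (nat_of_ord i == k)%:R = F k.
Proof.
move=> hF; case: (ltnP k M) => hk.
  rewrite (bigD1 (Ordinal hk)) //= eqxx mulr1 big1 ?addr0 // => i hi.
  rewrite (_ : (nat_of_ord i == k) = false) ?mulr0 //.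
  by apply: contraNF hi => /eqP e; apply/eqP/val_inj.
rewrite hF // big1 // => i _.
by rewrite (_ : (nat_of_ord i == k) = false) ?mulr0 //; apply/negbTE/eqP; have := ltn_ord i; lia.
Qed.

Definition E (f : {poly C}) (j : nat) : C :=
  f`_j + c1 * f`_j.+1 + c1 * (if j is j'.+1 then f`_j' else 0).

Lemma lformE f g : lform c f g = \sum_(j < size g) (g`_j)^* * E f j.
Proof.
rewrite /lform exchange_big; apply: eq_bigr => j _.
under eq_bigr => i _ do rewrite cE !mulrDr !mulrA.
rewrite !big_split /=.
have nd : forall k, (size f <= k)%N -> f`_k = 0 by move=> k hk; rewrite nth_default.
rewrite (sum_delta _ _ (fun i => f`_i * (g`_j)^*)); last by move=> h; rewrite nd ?mul0r.
rewrite (sum_delta _ _ (fun i => f`_i * (g`_j)^* * c1)); last by move=> h; rewrite nd ?mul0r.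
rewrite /E; case: (nat_of_ord j) => [|j'].
  rewrite big1 ?addr0; last by move=> i _; rewrite (_ : (i.+1 == 0)%N = false) // mulr0.
  by rewrite mulr0 addr0; ring.
rewrite (eq_bigr (fun i : 'I_(size f) => f`_i * (g`_j'.+1)^* * c1 * (nat_of_ord i == j')%:R)); last first.
  by move=> i _; rewrite eqSS.
rewrite (sum_delta _ _ (fun i => f`_i * (g`_j'.+1)^* * c1)); last by move=> h; rewrite nd ?mul0r.
by ring.
Qed.


Lemma keyid k : sk k.+1 + c1 * (sk k.+2 + sk k) = 0.
Proof.
have e := sid 1 k; rewrite !add1n in e.
have h2 := sk_neq0 2 isT.
rewrite c1E mulrDr.
have -> : - sk 1 / sk 2 * sk k.+2 + - sk 1 / sk 2 * sk k = - (sk 1 * sk k.+2 + sk 1 * sk k) / sk 2.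
  by field.
by rewrite e mulNr mulrAC divff // mul1r subrr.
Qed.

Lemma EP s j : E (P s) j = c1 * (j == s.+1)%:R - c1 * sk s.+2 / sk s.+1 * (j == s)%:R.
Proof.
have hs1 := sk_neq0 s.+1 isT.
rewrite /E !coefP; case: j => [|j].
  case: s hs1 => [|s] hs1 /=.
    rewrite mulr0 !addr0 sub0r mulr1 divff // c1E.
    by field; rewrite (sk_neq0 2 isT) (sk_neq0 1 isT).
  rewrite !mulr0 subr0 addr0.
  have := keyid 0; rewrite sk0 addr0 => e.
  by rewrite mulrA -mulrDl e mul0r.
rewrite coefP.
case: (ltngtP j.+1 s) => h.
- bt (j.+1 < s.+1)%N; bt (j.+2 < s.+1)%N; bt (j < s.+1)%N; bf (j.+1 == s.+1)%N.
  rewrite !mulr0 subr0 !mulrA -!mulrDl -addrA -mulrDr.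
  by rewrite keyid mul0r.
- case: (eqVneq j s) => [ej|hne].
    subst j; bf (s.+1 < s.+1)%N; bf (s.+2 < s.+1)%N; bt (s < s.+1)%N.
    by rewrite eqxx !mulr0 !addr0 add0r subr0 divff.
  bf (j.+1 < s.+1)%N; bf (j.+2 < s.+1)%N; bf (j < s.+1)%N; bf (j.+1 == s.+1)%N.
  by rewrite !mulr0 !addr0 subr0.
- bt (j.+1 < s.+1)%N; bf (j.+2 < s.+1)%N; bt (j < s.+1)%N; bf (j.+1 == s.+1)%N.
  subst s; rewrite !mulr0 addr0 sub0r mulr1 divff //.
  have := keyid j.+1; rewrite mulrDr => e.
  apply: (mulIf hs1); rewrite mulrDl mul1r mulrA mulfVK // mulNr mulfVK //.
  by apply/eqP; rewrite -subr_eq0 opprK -addrA (addrC (c1 * sk j.+1)) e.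
Qed.


Lemma sum_delta2 (M k : nat) (F : nat -> C) (a : C) :
  ((M <= k)%N -> F k = 0) -> \sum_(i < M) F i * (a * (nat_of_ord i == k)%:R) = F k * a.
Proof.
move=> hF; rewrite -(sum_delta M k (fun i => F i * a)); last by move=> h; rewrite hF ?mul0r.
by apply: eq_bigr => i _; rewrite mulrA.
Qed.

Lemma lformP s g :
  lform c (P s) g = (g`_s.+1)^* * c1 - (g`_s)^* * (c1 * sk s.+2 / sk s.+1).
Proof.
rewrite lformE.
under eq_bigr => j _ do rewrite EP mulrBr.
have nd : forall k, (size g <= k)%N -> (g`_k)^* = 0.
  by move=> k hk; rewrite nth_default ?conjC0.
rewrite sumrB (sum_delta2 _ _ (fun i => (g`_i)^*)); last exact: nd.
by rewrite (sum_delta2 _ _ (fun i => (g`_i)^*)); last exact: nd.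
Qed.

Lemma mainP n r s : mu alpha c n r s =
  if s == (n + r)%N then 1
  else if (n <= s.+1)%N && (s < n + r)%N then - (sk n * sk 1) / (sk s.+2 * sk r.+1)
  else 0.
Proof.
rewrite /mu !PhiE !lformP !coefXnM !coefP ltnn ltnSn divff ?sk_neq0 // conjC0 conjC1 mul0r sub0r mul1r.
have hc1 : c1 != 0 by rewrite c1E mulf_neq0 ?oppr_eq0 ?invr_eq0 ?sk_neq0.
have hK : - (c1 * sk s.+2 / sk s.+1) != 0.
  by rewrite oppr_eq0 !mulf_neq0 ?invr_eq0 ?sk_neq0.
case: (boolP (s == (n + r)%N)) => h1.
  move/eqP: h1 => h1.
  bf (s.+1 < n)%N; bf (s.+1 - n < r.+1)%N; bf (s < n)%N; bt (s - n < r.+1)%N.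
  rewrite (_ : (s - n)%N = r); last by lia.
  by rewrite conjC0 skq_conj divff ?sk_neq0 // mul0r sub0r mul1r divff.
case: (boolP ((n <= s.+1)%N && (s < n + r)%N)) => h2.
  case: (ltnP s n) => h3.
    bf (s.+1 < n)%N; bt (s.+1 - n < r.+1)%N.
    rewrite (_ : (s.+1 - n)%N = 0%N); last by lia.
    rewrite (_ : n = s.+1); last by lia.
    rewrite conjC0 mul0r subr0 skq_conj.
    by field; rewrite hc1 !sk_neq0.
  bf (s.+1 < n)%N; bt (s.+1 - n < r.+1)%N; bt (s - n < r.+1)%N.
  rewrite (_ : (s.+1 - n)%N = (s - n).+1); last by lia.
  rewrite !skq_conj.
  have es : s = (n + (s - n))%N by lia.
  move: (s - n)%N es => m es; subst s.
  have e := sid m.+1 n.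
  have -> : sk n = (sk m.+2 * sk (m.+1 + n) - sk m.+1 * sk (m.+1 + n).+1) / sk 1.
    by rewrite -e addrAC subrr add0r mulrAC divff ?mul1r ?sk_neq0.
  rewrite (_ : (m.+1 + n)%N = (n + m).+1); last by lia.
  by field; rewrite hc1 !sk_neq0.
case: (ltnP s.+1 n) => h3.
  bt (s < n)%N.
  by rewrite conjC0 !mul0r subr0 mul0r.
bf (s.+1 - n < r.+1)%N; bf (s < n)%N; bf (s - n < r.+1)%N.
by rewrite conjC0 !mul0r subr0 mul0r.
Qed.

End Main.

Theorem proposition4p11 (C : numClosedFieldType) (a : C) (c : int -> C) :
  0 < a -> a < 1 ->
  let u := a^-1 + sqrtC (a ^- 2 - 1) in
  let alpha := fun n : nat => - (u - u^-1) / (u ^+ n.+2 - u ^- n.+2) in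
  is_OPUC_functional alpha c ->
  forall n r s : nat,
    mu alpha c n r s =
      if s == (n + r)%N then 1
      else if (n <= s.+1)%N && (s < n + r)%N then
        - ((u ^+ n - u ^- n) * (u - u^-1))
          / ((u ^+ s.+2 - u ^- s.+2) * (u ^+ r.+1 - u ^- r.+1))
      else 0.
Proof.
move=> ha0 ha1 u alpha [hc0 horth] n r s.
have hai : 1 < a^-1 by rewrite invf_gt1.
have hu : 1 < u.
  have hai' := hai; rewrite /u; apply: ltr_wpDr hai'; rewrite sqrtC_ge0 subr_ge0 -exprVn.
  exact: (exprn_ege1 _ (ltW hai)).
have horth' : forall m n : nat, m <> n ->
    lform c (Phi (@Submission.alpha C u) m) (Phi (@Submission.alpha C u) n) = 0.
  by move=> m k; rewrite !(@Phi_ext C _ _ (alphaE C u)); exact: horth.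
have := mainP C u hu c hc0 horth' n r s; rewrite /mu !(@Phi_ext C _ _ (alphaE C u)) /sk expr1 => ->.
by [].
Qed.
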